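(* Let $G$ be a commutative group, $G'$ a subgroup, $1<p<\infty$, and $f\in\ell^1(G')$ nonnegative (viewed also as a function on $G$, extended by zero). Then $\gamma_p(f,G)=\gamma_p(f,G')$.
   Context: For nonnegative functions $f,g$ on a commutative group $K$, $(f\star g)(x)=\max_t f(t)g(x-t)$ (max-convolution). For nonnegative $f\in\ell^1(K)$ and $1/p+1/q=1$, $\gamma_p(f,K)=\inf_{g,h}\frac{\|f\star g\star h\|_1}{\|g\|_p\|h\|_q}$, the infimum over nonzero nonnegative $g,h\in\ell^1(K)$. *)

(* Defs.v *)
From HB Require Import structures.
From mathcomp Require Import all_boot all_order all_algebra.
From mathcomp Require Import all_classical all_reals all_analysis.
Set Implicit Arguments. Unset Strict Implicit. Unset Printing Implicit Defensive.
Import Order.TTheory GRing.Theory Num.Theory.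
Local Open Scope classical_set_scope.
Local Open Scope ring_scope.

Section MaxConv.
Variables (R : realType) (K : zmodType).

Definition ell1 (f : K -> R) : Prop := summable [set: K] (fun x => (f x)%:E).

Definition nonneg (f : K -> R) : Prop := forall x, 0 <= f x.

Definition lpnorm (p : R) (g : K -> R) : R :=
  powR (fine (\esum_(x in [set: K]) (powR `|g x| p)%:E)) p^-1.

(* max-convolution (f * g)(x) = max_t f(t) g(x - t); written as a supremum,
   which is attained for nonnegative l^1 functions *)
Definition maxconv (f g : K -> R) : K -> R :=
  fun x => sup [set f t * g (x - t) | t in [set: K]].

(* conjugate exponent q with 1/p + 1/q = 1 *)
Definition conj_exp (p : R) : R := p / (p - 1).

Definition gamma (p : R) (f : K -> R) : R :=
  inf [set r | exists g h : K -> R,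
         [/\ ell1 g, nonneg g & g <> (fun _ => 0)] /\
         [/\ ell1 h, nonneg h & h <> (fun _ => 0)] /\
             r = lpnorm 1 (maxconv (maxconv f g) h)
                   / (lpnorm p g * lpnorm (conj_exp p) h)].

End MaxConv.

Definition ext_zero (R : realType) (K G : zmodType) (iota : K -> G)
  (f : K -> R) : G -> R :=
  fun x => match pselect (exists k, iota k = x) with
           | left e => f (projT1 (cid e))
           | right _ => 0
           end.

(* Main.v *)
Require Import Defs.
Set Warnings "-notation-overridden,-ambiguous-paths,-notation-incompatible-prefix".
From HB Require Import structures.
From mathcomp Require Import all_boot all_order all_algebra.
From mathcomp Require Import all_classical all_reals all_analysis.
From mathcomp.algebra_tactics Require Import ring lra.
Import Order.TTheory GRing.Theory Num.Theory.
Local Open Scope classical_set_scope.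
Local Open Scope ring_scope.


Section Esum.
Context {R : realType} {T : choiceType}.
Implicit Types (a : T -> \bar R).

Lemma esumZl (c : R) a (S : set T) : 0 <= c -> (forall x, (0 <= a x)%E) ->
  (\esum_(i in S) (c%:E * a i) = c%:E * \esum_(i in S) a i)%E.
Proof.
move=> c0 a0; rewrite /esum -ereal_supZl//; last first.
  by apply/set0P; exists 0%E; exists set0; [exact: fsets_set0|rewrite fsbig_set0].
congr ereal_sup; apply/seteqP; split => x /=.
  move=> [A fA <-]; exists (\sum_(i \in A) a i)%E; first by exists A.
  by rewrite ge0_mule_fsumr.
by move=> [_ [A fA <-] <-]; exists A => //; rewrite ge0_mule_fsumr.
Qed.

Lemma esum_sub a (A B : set T) : A `<=` B ->
  (\esum_(i in A) a i <= \esum_(i in B) a i)%E.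
Proof.
move=> AB; rewrite /esum; apply: ereal_sup_le => _ [X [fX XA] <-].
by exists X => //; split => //; exact: subset_trans XA AB.
Qed.

Lemma esum_single a (S : set T) x : S x -> (a x <= \esum_(i in S) a i)%E.
Proof.
move=> Sx; apply: esum_ge; exists [set x]; last by rewrite fsbig_set1.
by split; [exact: finite_set1|move=> y ->].
Qed.

End Esum.


Section MC.
Context {R : realType} {T : zmodType}.
Implicit Types (phi psi : T -> R).

Definition bnd phi := exists M : R, forall x, phi x <= M.

Lemma mc_ub phi psi x t : nonneg phi -> nonneg psi -> bnd phi -> bnd psi ->
  phi t * psi (x - t) <= maxconv phi psi x.
Proof.
move=> p0 q0 [M1 h1] [M2 h2].
have hE : has_ubound [set phi s * psi (x - s) | s in [set: T]].
  by exists (M1 * M2) => _ [s _ <-]; apply: ler_pM.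
by apply: (ub_le_sup hE); exists t.
Qed.

Lemma mc_le phi psi x c : (forall t, phi t * psi (x - t) <= c) ->
  maxconv phi psi x <= c.
Proof.
move=> h; apply: ge_sup; first by exists (phi 0 * psi (x - 0)), 0.
by move=> _ [s _ <-].
Qed.

Lemma mc_ge0 phi psi x : nonneg phi -> nonneg psi -> bnd phi -> bnd psi ->
  0 <= maxconv phi psi x.
Proof.
move=> p0 q0 b1 b2; apply: (le_trans _ (mc_ub phi psi x 0 p0 q0 b1 b2)).
exact: mulr_ge0.
Qed.

Lemma mc_nonneg phi psi : nonneg phi -> nonneg psi -> bnd phi -> bnd psi ->
  nonneg (maxconv phi psi).
Proof. by move=> *; move=> x; exact: mc_ge0. Qed.

Lemma mc_bnd phi psi : nonneg phi -> nonneg psi -> bnd phi -> bnd psi ->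
  bnd (maxconv phi psi).
Proof.
move=> p0 q0 [M1 h1] [M2 h2]; exists (M1 * M2) => x; apply: mc_le => t.
by apply: ler_pM.
Qed.

Lemma mc_leM phi psi x (c w : R) : 0 <= w ->
  (forall t, phi t * psi (x - t) * w <= c) -> maxconv phi psi x * w <= c.
Proof.
move=> w0 h; have [w_0|wn0] := eqVneq w 0; first subst w.
  by rewrite mulr0; have := h 0; rewrite mulr0.
have wp : 0 < w by rewrite lt_def wn0.
rewrite -ler_pdivlMr //; apply: mc_le => t; rewrite ler_pdivlMr //; exact: h.
Qed.

End MC.


Section Swap.
Context {R : realType}.
Lemma esum_swap (T1 T2 : choiceType) (a : T1 -> T2 -> \bar R) :
  (forall i j, (0 <= a i j)%E) ->
  (\esum_(i in [set: T1]) \esum_(j in [set: T2]) a i j =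
   \esum_(j in [set: T2]) \esum_(i in [set: T1]) a i j)%E.
Proof.
move=> a0; rewrite esum_esum //= esum_esum //=.
rewrite (reindex_esum ([set: T2] `*`` (fun=> [set: T1])) ([set: T1] `*`` (fun=> [set: T2])) (fun z => (z.2, z.1))) //.
split => //.
- by move=> [x y] [x' y'] _ _ /= [-> ->].
- by move=> [x y] _; exists (y, x).
Qed.
End Swap.

Section L1.
Context {R : realType} {T : zmodType}.
Implicit Types (phi psi : T -> R).
Local Open Scope ereal_scope.

Definition E1 phi := \esum_(x in [set: T]) (phi x)%:E.
Definition Ep (r : R) phi := \esum_(x in [set: T]) (powR (phi x) r)%:E.

Lemma E1_ge0 phi : nonneg phi -> 0 <= E1 phi.
Proof. by move=> p0; apply: esum_ge0 => x _; rewrite lee_fin. Qed.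

Lemma Ep_ge0 r phi : 0 <= Ep r phi.
Proof. by apply: esum_ge0 => x _; rewrite lee_fin powR_ge0. Qed.

Lemma ell1E phi : nonneg phi -> ell1 phi = (E1 phi < +oo).
Proof.
move=> p0; rewrite /ell1 /summable /E1; congr (_ < _).
by apply: eq_esum => x _; rewrite abse_EFin ger0_norm.
Qed.

Lemma E1_fin phi : nonneg phi -> ell1 phi -> E1 phi = (fine (E1 phi))%:E.
Proof. by move=> p0 l; rewrite fineK// ge0_fin_numE ?E1_ge0// -ell1E. Qed.

Lemma Ep_finE r phi : Ep r phi < +oo -> Ep r phi = (fine (Ep r phi))%:E.
Proof. by move=> l; rewrite fineK// ge0_fin_numE ?Ep_ge0. Qed.

Lemma le_E1 phi x : nonneg phi -> (phi x)%:E <= E1 phi.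
Proof. by move=> p0; apply: esum_single. Qed.

Lemma bnd_ell1 phi : nonneg phi -> ell1 phi -> bnd phi.
Proof.
move=> p0 l; exists (fine (E1 phi)) => x.
by rewrite -lee_fin -E1_fin//; exact: le_E1.
Qed.

Lemma lpnorm1E phi : nonneg phi -> lpnorm 1 phi = fine (E1 phi).
Proof.
move=> p0; rewrite /lpnorm invr1 powRr1; last first.
  by apply: fine_ge0; apply: esum_ge0 => x _; rewrite lee_fin powR_ge0.
congr fine; apply: eq_esum => x _; rewrite ger0_norm// powRr1//.
Qed.

Lemma lpnorm1E' phi : nonneg phi -> ell1 phi -> (lpnorm 1 phi)%:E = E1 phi.
Proof. by move=> p0 l; rewrite lpnorm1E// -E1_fin. Qed.

Lemma lpnormE r phi : nonneg phi -> lpnorm r phi = powR (fine (Ep r phi)) r^-1.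
Proof.
move=> p0; rewrite /lpnorm /Ep; congr (powR (fine _) _).
by apply: eq_esum => x _; rewrite ger0_norm.
Qed.

Lemma Ep_fin r phi : (1 <= r)%R -> nonneg phi -> ell1 phi -> Ep r phi < +oo.
Proof.
move=> r1 p0 l; have [M hM] := bnd_ell1 _ p0 l.
have M0 : (0 <= M)%R by apply: le_trans (p0 (0 : T)%R) (hM (0 : T)%R).
apply: (@le_lt_trans _ _ (\esum_(x in [set: T]) ((powR M (r - 1))%:E * (phi x)%:E))).
  apply: le_esum => x _; rewrite -EFinM lee_fin -mulr_powRB1//; last first.
    by apply: lt_le_trans r1.
  rewrite mulrC; apply: ler_wpM2r => //; apply: ge0_ler_powR => //.
  - by rewrite subr_ge0.
  - by rewrite nnegrE.
rewrite esumZl ?powR_ge0//.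
rewrite -/(E1 phi) E1_fin// -EFinM; exact: ltry.
Qed.

Lemma mc_le_esum phi psi x : nonneg phi -> nonneg psi -> 
  (maxconv phi psi x)%:E <= \esum_(t in [set: T]) (phi t * psi (x - t))%:E.
Proof.
move=> p0 q0.
have e0 : 0 <= \esum_(t in [set: T]) (phi t * psi (x - t))%:E.
  by apply: esum_ge0 => t _; rewrite lee_fin mulr_ge0.
move: e0; case E: (\esum_(t in [set: T]) (phi t * psi (x - t))%:E) => [r| |] //= r0; last by rewrite leey.
rewrite lee_fin; apply: mc_le => t; rewrite -lee_fin -E.
by apply: esum_single.
Qed.

Lemma E1_mc phi psi : nonneg phi -> nonneg psi -> ell1 phi -> ell1 psi ->
  E1 (maxconv phi psi) <= E1 phi * E1 psi.
Proof.
move=> p0 q0 l1 l2.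
apply: (@le_trans _ _ (\esum_(x in [set: T]) \esum_(t in [set: T]) (phi t * psi (x - t))%:E)).
  by apply: le_esum => x _; apply: mc_le_esum.
rewrite esum_swap; last by move=> x t; rewrite lee_fin mulr_ge0.
rewrite [E1 psi]E1_fin// muleC -esumZl ?fine_ge0 ?E1_ge0//.
apply: le_esum => t _; rewrite muleC.
under eq_esum do rewrite EFinM.
rewrite esumZl//.
rewrite -E1_fin// /E1 (reindex_esum [set: T] [set: T] (fun y => (y - t)%R)) //.
  split => //; first by move=> y y' _ _ /addIr.
  by move=> y _; exists (y + t)%R => //; rewrite addrK.
by move=> x; rewrite lee_fin.
Qed.

Lemma ell1_mc phi psi : nonneg phi -> nonneg psi -> ell1 phi -> ell1 psi ->
  ell1 (maxconv phi psi).
Proof.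
move=> p0 q0 l1 l2; have b1 := bnd_ell1 _ p0 l1; have b2 := bnd_ell1 _ q0 l2.
rewrite ell1E; last exact: mc_nonneg.
apply: le_lt_trans (E1_mc _ _ p0 q0 l1 l2) _.
by rewrite E1_fin// [E1 psi]E1_fin// -EFinM ltry.
Qed.

End L1.


Section Ext.
Context {R : realType} {G K : zmodType} (iota : {additive K -> G})
  (iota_inj : injective iota).
Implicit Types (phi psi : K -> R).

Lemma extE phi k : ext_zero iota phi (iota k) = phi k.
Proof.
rewrite /ext_zero; case: pselect => [e|n]; last by exfalso; apply: n; exists k.
by case: cid => k' /= /iota_inj ->.
Qed.

Lemma ext0 phi x : ~ (exists k, iota k = x) -> ext_zero iota phi x = 0.
Proof. by move=> n; rewrite /ext_zero; case: pselect. Qed.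

Lemma ext_cases phi x : (exists2 k, x = iota k & ext_zero iota phi x = phi k) \/
   (~ (exists k, iota k = x) /\ ext_zero iota phi x = 0).
Proof.
have [[k <-]|n] := pselect (exists k, iota k = x).
  by left; exists k => //; rewrite extE.
by right; split => //; rewrite ext0.
Qed.

Lemma ext_nonneg phi : nonneg phi -> nonneg (ext_zero iota phi).
Proof. by move=> p0 x; case: (ext_cases phi x) => [[k _ ->]|[_ ->]]. Qed.

Lemma ext_bnd phi : nonneg phi -> bnd phi -> bnd (ext_zero iota phi).
Proof.
move=> p0 [M hM]; exists M => x; case: (ext_cases phi x) => [[k _ ->]|[_ ->]] //.
exact: le_trans (p0 0) (hM 0).
Qed.

Lemma esum_ext (Th : R -> \bar R) phi : Th 0 = 0%E -> (forall y, (0 <= Th y)%E) ->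
  (\esum_(x in [set: G]) Th (ext_zero iota phi x) = \esum_(k in [set: K]) Th (phi k))%E.
Proof.
move=> T0 Tge0; rewrite (esumID (range iota)) //.
rewrite [X in (_ + X)%E]esum1 ?adde0; last first.
  by move=> x [_ /= nx]; rewrite ext0 // => -[k hk]; apply: nx; exists k.
rewrite setTI (esum_image [set: K] iota (fun x => Th (ext_zero iota phi x))).
  by apply: eq_esum => k _; rewrite extE.
by move=> x y _ _; apply: iota_inj.
Qed.

Lemma ell1_ext phi : ell1 phi -> ell1 (ext_zero iota phi).
Proof.
rewrite /ell1 /summable; rewrite (esum_ext (fun y => `|y%:E|%E)) //.
by rewrite abse0.
Qed.

Lemma lpnorm_ext r phi : r != 0 -> lpnorm r (ext_zero iota phi) = lpnorm r phi.
Proof.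
move=> r0; rewrite /lpnorm (esum_ext (fun y => (powR `|y| r)%:E)) //.
  by rewrite normr0 powR0.
Qed.

Lemma ext_nz phi : phi <> (fun _ => 0) -> ext_zero iota phi <> (fun _ => 0).
Proof.
move=> nz e; apply: nz; apply: funext => k.
by rewrite -(extE phi k) e.
Qed.

Lemma mc_ext phi psi : nonneg phi -> nonneg psi -> bnd phi -> bnd psi ->
  maxconv (ext_zero iota phi) (ext_zero iota psi) = ext_zero iota (maxconv phi psi).
Proof.
move=> p0 q0 b1 b2.
have ep0 := ext_nonneg _ p0; have eq0 := ext_nonneg _ q0.
have eb1 := ext_bnd _ p0 b1; have eb2 := ext_bnd _ q0 b2.
apply: funext => x.
have [[k ->]|nx] := pselect (exists k, x = iota k).
  rewrite extE; apply/le_anti/andP; split.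
    apply: mc_le => t; case: (ext_cases phi t) => [[s -> ->]|[_ ->]].
      rewrite -raddfB extE; exact: mc_ub.
    by rewrite mul0r; apply: mc_ge0.
  apply: mc_le => s; rewrite -(extE phi s) -(extE psi (k - s)) raddfB.
  exact: mc_ub.
rewrite ext0; last by move=> [k hk]; apply: nx; exists k.
apply/le_anti/andP; split; last by apply: mc_ge0.
apply: mc_le => t; case: (ext_cases phi t) => [[s -> _]|[_ ->]]; last by rewrite mul0r.
rewrite [ext_zero iota psi _]ext0 ?mulr0 // => -[k hk]; apply: nx.
by exists (k + s); rewrite raddfD hk subrK.
Qed.

End Ext.


Section Cos.
Context {R : realType} {G K : zmodType} (iota : {additive K -> G})
  (iota_inj : injective iota).

Definition Cs (x : G) : set G := [set y | exists k, y = x + iota k].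
Definition rep (x : G) : G := xget 0 (Cs x).
Definition Bs : set G := [set a | rep a = a].

Lemma Cs_refl x : Cs x x.
Proof. by exists 0; rewrite raddf0 addr0. Qed.

Lemma rep_in x : Cs x (rep x).
Proof. exact: (xgetI 0 (Cs_refl x)). Qed.

Lemma Cs_eq {x y} : Cs x y -> Cs y = Cs x.
Proof.
move=> [k ->]; apply/seteqP; split => z [k' ->].
  by exists (k + k'); rewrite raddfD addrA.
by exists (k' - k); rewrite raddfB -addrA [iota k + _]addrC subrK.
Qed.

Lemma rep_eq {x y} : Cs x y -> rep y = rep x.
Proof. by move=> h; rewrite /rep (Cs_eq h). Qed.

Lemma Bs_rep x : Bs (rep x).
Proof. exact: rep_eq (rep_in x). Qed.

Lemma decomp x : exists k, x = rep x + iota k.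
Proof.
have [k hk] := rep_in x; exists (- k).
by rewrite hk raddfN addrK.
Qed.

Lemma decomp_uniq {a a' k k'} : Bs a -> Bs a' -> a + iota k = a' + iota k' ->
  a = a' /\ k = k'.
Proof.
move=> Ba Ba' e.
have h : Cs a a' by exists (k - k'); rewrite raddfB addrA e addrK.
have aa : a = a' by rewrite -Ba -Ba' (rep_eq h).
split => //; subst a'; apply: iota_inj; exact: (addrI a).
Qed.

Local Open Scope ereal_scope.

Lemma esum_decomp (w : G -> \bar R) : (forall x, 0 <= w x) ->
  \esum_(x in [set: G]) w x =
  \esum_(a in Bs) \esum_(k in [set: K]) w (a + iota k)%R.
Proof.
move=> w0; rewrite esum_esum //.
rewrite (reindex_esum (Bs `*`` (fun=> [set: K])) [set: G] (fun z => z.1 + iota z.2)%R) //.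
split => //.
- move=> [a k] [a' k'] /set_mem [Ba _] /set_mem [Ba' _] /= e.
  by case: (decomp_uniq Ba Ba' e) => /= -> ->.
- move=> x _; have [k hk] := decomp x; exists (rep x, k) => //=.
  by split => //; exact: Bs_rep.
Qed.

Lemma esum_shift_le (w : G -> \bar R) (c : G) : (forall x, 0 <= w x) ->
  \esum_(a in Bs) \esum_(k in [set: K]) w (a + iota k + c)%R <=
  \esum_(x in [set: G]) w x.
Proof.
move=> w0; rewrite esum_esum //.
rewrite -(esum_image (Bs `*`` (fun=> [set: K])) (fun z => z.1 + iota z.2 + c)%R w).
  exact: esum_sub.
move=> [a k] [a' k'] /set_mem [Ba _] /set_mem [Ba' _] /= /addIr e.
by case: (decomp_uniq Ba Ba' e) => /= -> ->.
Qed.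

Lemma esum_K_le (w : G -> \bar R) (a : G) : (forall x, 0 <= w x) ->
  \esum_(k in [set: K]) w (a + iota k)%R <= \esum_(x in [set: G]) w x.
Proof.
move=> w0; rewrite -(esum_image [set: K] (fun k => a + iota k)%R w).
  exact: esum_sub.
by move=> k k' _ _ /addrI /iota_inj.
Qed.

End Cos.


Lemma powR_invK (R : realType) (X r : R) : 0 <= X -> r != 0 -> powR (powR X r^-1) r = X.
Proof. by move=> X0 r0; rewrite -powRrM mulVf // powRr1. Qed.

Lemma lpnorm_gt0 (R : realType) (T : zmodType) (r : R) (phi : T -> R) x :
  1 <= r -> nonneg phi -> ell1 phi -> phi x != 0 -> 0 < lpnorm r phi.
Proof.
move=> r1 p0 l nz; rewrite lpnormE //; apply: powR_gt0.
rewrite -lte_fin -Ep_finE; last exact: Ep_fin.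
apply: (@lt_le_trans _ _ (powR (phi x) r)%:E); last exact: esum_single.
by rewrite lte_fin; apply: powR_gt0; rewrite lt_def nz p0.
Qed.

Lemma lpnorm_ge0 (R : realType) (T : zmodType) (r : R) (phi : T -> R) :
  0 <= lpnorm r phi.
Proof. exact: powR_ge0. Qed.

Lemma conj_gt1 (R : realType) (p : R) : 1 < p -> 1 < conj_exp p.
Proof.
move=> p1; rewrite /conj_exp ltr_pdivlMr; last by lra.
lra.
Qed.

Lemma conj_inv (R : realType) (p : R) : 1 < p -> (conj_exp p)^-1 = 1 - p^-1.
Proof.
move=> p1; have ? : p != 0 by lra. have ? : p - 1 != 0 by lra.
rewrite /conj_exp; field; by apply/andP.
Qed.

Lemma interp (R : realType) (x U p : R) : 0 <= x -> x <= U -> 1 <= p ->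
  powR x p <= powR U (p - 1) * x.
Proof.
move=> x0 xU p1; rewrite -mulr_powRB1 //; last by lra.
rewrite mulrC; apply: ler_wpM2r => //; apply: ge0_ler_powR => //; first by lra.
by rewrite nnegrE; apply: le_trans xU.
Qed.

Lemma pbound (R : realType) (r s X Y W : R) : 1 <= r -> 0 <= X -> 0 <= Y -> 0 <= W ->
  X <= powR Y (r - 1) * W -> (r - 1) * r^-1 = s ->
  powR X r^-1 <= powR Y s * powR W r^-1.
Proof.
move=> r1 X0 Y0 W0 hX hs.
apply: (le_trans (y := powR (powR Y (r - 1) * W) r^-1)).
  apply: ge0_ler_powR; [rewrite invr_ge0; lra|by rewrite nnegrE|by rewrite nnegrE mulr_ge0 ?powR_ge0|exact: hX].
rewrite le_eqVlt; apply/orP; left; apply/eqP; rewrite -hs powRrM; exact: (powRM _ (powR_ge0 _ _) W0).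
Qed.

Lemma fin_of_mul (R : realType) (c : R) (x y : \bar R) : 0 < c -> (0 <= x)%E ->
  (c%:E * x <= y)%E -> (y < +oo)%E -> (x < +oo)%E.
Proof.
move=> c0; case: x => [r| |] //= _; first by rewrite ltry.
rewrite mulry gtr0_sg // mul1e => h1 h2.
by have := le_lt_trans h1 h2; rewrite ltxx.
Qed.

Lemma final_alg (R : realType) (p gam L U1 V1 P Q : R) : 1 < p -> 0 < gam ->
  0 < U1 -> 0 < V1 -> 0 <= L ->
  P <= powR (L / (gam * V1)) (conj_exp p)^-1 * powR U1 p^-1 ->
  Q <= powR (L / (gam * U1)) p^-1 * powR V1 (conj_exp p)^-1 -> 0 <= P -> 0 <= Q ->
  gam * (P * Q) <= L.
Proof.
move=> p1 g0 U0 V0 L0 hP hQ P0 Q0.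
set q := conj_exp p.
have hq : q^-1 + p^-1 = 1 by rewrite /q conj_inv //; ring.
have M0 : 0 <= L / gam by rewrite divr_ge0 // ltW.
have e1 : L / (gam * V1) * V1 = L / gam by field; lra.
have e2 : L / (gam * U1) * U1 = L / gam by field; lra.
have h1 : P * Q <= powR (L / (gam * V1)) q^-1 * powR U1 p^-1 *
                   (powR (L / (gam * U1)) p^-1 * powR V1 q^-1).
  by apply: ler_pM.
have h2 : powR (L / (gam * V1)) q^-1 * powR U1 p^-1 *
          (powR (L / (gam * U1)) p^-1 * powR V1 q^-1) = L / gam.
  have -> : powR (L / (gam * V1)) q^-1 * powR U1 p^-1 *
          (powR (L / (gam * U1)) p^-1 * powR V1 q^-1) =
          powR (L / (gam * V1) * V1) q^-1 * powR (L / (gam * U1) * U1) p^-1.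
    rewrite !powRM ?divr_ge0 ?invr_ge0 ?mulr_ge0 //; try lra.
  transitivity (powR (L / gam) q^-1 * powR (L / gam) p^-1).
    by congr (powR _ _ * powR _ _).
  by rewrite -powRD ?hq ?powRr1 // oner_eq0.
rewrite h2 in h1.
apply: (le_trans (ler_wpM2l (ltW g0) h1)).
by rewrite mulrC divfK // gt_eqF.
Qed.

Section Abstract.
Context {R : realType} {I : choiceType}.
Local Open Scope ereal_scope.

Lemma abstract_main (B : set I) (u v : I -> R) (p gam : R) (E Pp Qq : \bar R) (P Q : R) :
  (1 < p)%R -> (0 < gam)%R -> (forall a, 0 <= u a)%R -> (forall b, 0 <= v b)%R ->
  (exists2 a, B a & 0 < u a)%R -> (exists2 b, B b & 0 < v b)%R ->
  0 <= E -> E < +oo ->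
  (forall a, ((gam * u a)%:E * (\esum_(b in B) (v b)%:E) <= E)%E) ->
  (forall b, ((gam * v b)%:E * (\esum_(a in B) (u a)%:E) <= E)%E) ->
  Pp = (\esum_(a in B) (powR (u a) p)%:E) ->
  Qq = (\esum_(b in B) (powR (v b) (conj_exp p))%:E) ->
  Pp < +oo -> Qq < +oo ->
  P = powR (fine Pp) p^-1 -> Q = powR (fine Qq) (conj_exp p)^-1 ->
  (gam * (P * Q) <= fine E)%R.
Proof.
move=> p1 gam0 u0 v0 [a0 Ba0 ua0] [b0 Bb0 vb0] E0 Efin F4a F4b PpE QqE Ppf Qqf PE QE.
set q := conj_exp p.
have q1 : (1 < q)%R by apply: conj_gt1.
have EE : E = (fine E)%:E by rewrite fineK // ge0_fin_numE.
have L0 : (0 <= fine E)%R by apply: fine_ge0.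
set L := fine E in EE L0 *.
set V1e := \esum_(b in B) (v b)%:E in F4a *.
set U1e := \esum_(a in B) (u a)%:E in F4b *.
have V1pos : 0 < V1e.
  by apply: (@lt_le_trans _ _ (v b0)%:E); [rewrite lte_fin|apply: esum_single].
have U1pos : 0 < U1e.
  by apply: (@lt_le_trans _ _ (u a0)%:E); [rewrite lte_fin|apply: esum_single].
have V1fin : V1e < +oo.
  apply: (@fin_of_mul _ (gam * u a0)%R V1e E) => //.
  - exact: (mulr_gt0 gam0 ua0).
  - exact: (ltW V1pos).
have U1fin : U1e < +oo.
  apply: (@fin_of_mul _ (gam * v b0)%R U1e E) => //.
  - exact: (mulr_gt0 gam0 vb0).
  - exact: (ltW U1pos).
have V1E : V1e = (fine V1e)%:E by rewrite fineK // ge0_fin_numE // ltW.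
have U1E : U1e = (fine U1e)%:E by rewrite fineK // ge0_fin_numE // ltW.
set V1 := fine V1e in V1E *; set U1 := fine U1e in U1E *.
have V1p : (0 < V1)%R by rewrite -lte_fin -V1E.
have U1p : (0 < U1)%R by rewrite -lte_fin -U1E.
have ub : forall a, (u a <= L / (gam * V1))%R.
  move=> a; rewrite ler_pdivlMr ?mulr_gt0 //.
  have -> : (u a * (gam * V1) = gam * u a * V1)%R by ring.
  by have := F4a a; rewrite V1E EE -EFinM lee_fin.
have vb : forall b, (v b <= L / (gam * U1))%R.
  move=> b; rewrite ler_pdivlMr ?mulr_gt0 //.
  have -> : (v b * (gam * U1) = gam * v b * U1)%R by ring.
  by have := F4b b; rewrite U1E EE -EFinM lee_fin.
have Ldg : (0 <= L / (gam * V1))%R by rewrite divr_ge0 // mulr_ge0 // ltW.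
have Ldh : (0 <= L / (gam * U1))%R by rewrite divr_ge0 // mulr_ge0 // ltW.
have p0 : p != 0%R by rewrite gt_eqF // (lt_trans ltr01 p1).
have q0 : q != 0%R by rewrite gt_eqF // (lt_trans ltr01 q1).
have Pb : (P <= powR (L / (gam * V1)) q^-1 * powR U1 p^-1)%R.
  rewrite PE; apply: pbound.
  - exact: ltW.
  - by apply: fine_ge0; rewrite PpE; apply: esum_ge0 => a _; rewrite lee_fin powR_ge0.
  - exact: Ldg.
  - exact: ltW.
  - rewrite -lee_fin fineK; last by rewrite ge0_fin_numE // PpE esum_ge0 // => a _; rewrite lee_fin powR_ge0.
    rewrite PpE EFinM -U1E /U1e -esumZl ?powR_ge0 //.
    apply: le_esum => a Ba; rewrite -EFinM lee_fin; apply: interp => //.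
    exact: ltW.
  - have ? : (p - 1 != 0)%R by rewrite subr_eq0 gt_eqF.
    by rewrite /q conj_inv //; field.
have Qb : (Q <= powR (L / (gam * U1)) p^-1 * powR V1 q^-1)%R.
  rewrite QE; apply: pbound.
  - exact: ltW.
  - by apply: fine_ge0; rewrite QqE; apply: esum_ge0 => b _; rewrite lee_fin powR_ge0.
  - exact: Ldh.
  - exact: ltW.
  - rewrite -lee_fin fineK; last by rewrite ge0_fin_numE // QqE esum_ge0 // => b _; rewrite lee_fin powR_ge0.
    rewrite QqE EFinM -V1E /V1e -esumZl ?powR_ge0 //.
    apply: le_esum => b Bb; rewrite -EFinM lee_fin; apply: interp => //.
    exact: ltW.
  - rewrite mulrBl mul1r mulfV // /q conj_inv //; ring.
apply: (@final_alg _ p gam L U1 V1 P Q p1 gam0 U1p V1p L0 Pb Qb).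
- by rewrite PE powR_ge0.
- by rewrite QE powR_ge0.
Qed.

End Abstract.


Section Main.
Context {R : realType} {G K : zmodType} (iota : {additive K -> G})
  (iota_inj : injective iota).
Variables (p : R) (f : K -> R) (g h : G -> R) (gam : R).
Hypotheses (p1 : 1 < p) (f0 : nonneg f) (fl : ell1 f)
  (g0 : nonneg g) (gl : ell1 g) (gnz : g <> (fun _ => 0))
  (h0 : nonneg h) (hl : ell1 h) (hnz : h <> (fun _ => 0)) (gam0 : 0 < gam)
  (HK : forall g' h' : K -> R, nonneg g' -> ell1 g' -> nonneg h' -> ell1 h' ->
     gam * (lpnorm p g' * lpnorm (conj_exp p) h') <=
     lpnorm 1 (maxconv (maxconv f g') h')).

Let q := conj_exp p.
Let q1 : 1 < q. Proof. exact: conj_gt1. Qed.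
Let F := ext_zero iota f.
Let Phi := maxconv (maxconv F g) h.
Let ga a := fun k => g (a + iota k).
Let hb b := fun k => h (b + iota k).
Let u a := lpnorm p (ga a).
Let v b := lpnorm q (hb b).
Let Psi a b := maxconv (maxconv f (ga a)) (hb b).

Let F0 : nonneg F. Proof. exact: ext_nonneg. Qed.
Let Fl : ell1 F. Proof. exact: ell1_ext. Qed.
Let Fb : bnd F. Proof. exact: bnd_ell1. Qed.
Let gb : bnd g. Proof. exact: bnd_ell1. Qed.
Let hbd : bnd h. Proof. exact: bnd_ell1. Qed.
Let fb : bnd f. Proof. exact: bnd_ell1. Qed.
Let Fg0 : nonneg (maxconv F g). Proof. exact: mc_nonneg. Qed.
Let Fgl : ell1 (maxconv F g). Proof. exact: ell1_mc. Qed.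
Let Fgb : bnd (maxconv F g). Proof. exact: bnd_ell1. Qed.
Let Phi0 : nonneg Phi. Proof. exact: mc_nonneg. Qed.
Let Phil : ell1 Phi. Proof. exact: ell1_mc. Qed.

Let ga0 a : nonneg (ga a). Proof. by move=> k; apply: g0. Qed.
Let hb0 b : nonneg (hb b). Proof. by move=> k; apply: h0. Qed.
Let gal a : ell1 (ga a).
Proof.
rewrite ell1E //; apply: le_lt_trans (esum_K_le iota iota_inj (fun x => (g x)%:E) a _) _.
  by move=> x; rewrite lee_fin.
by rewrite -ell1E.
Qed.
Let hbl b : ell1 (hb b).
Proof.
rewrite ell1E //; apply: le_lt_trans (esum_K_le iota iota_inj (fun x => (h x)%:E) b _) _.
  by move=> x; rewrite lee_fin.
by rewrite -ell1E.
Qed.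

Let gab a : bnd (ga a). Proof. exact: bnd_ell1. Qed.
Let hbb b : bnd (hb b). Proof. exact: bnd_ell1. Qed.
Let fga0 a : nonneg (maxconv f (ga a)). Proof. exact: mc_nonneg. Qed.
Let fgab a : bnd (maxconv f (ga a)). Proof. exact: mc_bnd. Qed.
Let fgal a : ell1 (maxconv f (ga a)). Proof. exact: ell1_mc. Qed.

Let Psi0 a b : nonneg (Psi a b).
Proof. exact: mc_nonneg. Qed.

Let Psil a b : ell1 (Psi a b).
Proof. exact: ell1_mc. Qed.

Let claim1 a b k : Psi a b k <= Phi (a + b + iota k).
Proof.
apply: mc_le => s; apply: mc_leM; first exact: hb0.
move=> t.
have e1 : f t * ga a (s - t) = F (iota t) * g ((a + iota s) - iota t).
  rewrite /F (extE iota iota_inj) /ga /= -addrA; congr (_ * g (_ + _)).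
  exact: raddfB.
have e2 : hb b (k - s) = h ((a + b + iota k) - (a + iota s)).
  rewrite /hb /= -[a + b + _]addrA opprD addrACA subrr add0r -addrA; congr (h (_ + _)).
  exact: raddfB.
rewrite e1 e2; apply: le_trans (mc_ub _ _ _ (a + iota s) Fg0 h0 Fgb hbd).
apply: ler_wpM2r; first exact: h0.
exact: mc_ub.
Qed.

Local Open Scope ereal_scope.
Let U1e := \esum_(a in Bs iota) (u a)%:E.
Let V1e := \esum_(b in Bs iota) (v b)%:E.

Let F3a a : \esum_(b in Bs iota) (lpnorm 1 (Psi a b))%:E <= E1 Phi.
Proof.
apply: (le_trans _ (esum_shift_le iota iota_inj (fun x => (Phi x)%:E) a _)); last first.
  by move=> x; rewrite lee_fin.
apply: le_esum => b _; rewrite lpnorm1E' //.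
apply: le_esum => k _; rewrite lee_fin.
have -> : (b + iota k + a = a + b + iota k)%R by rewrite addrC addrA.
exact: claim1.
Qed.

Let F3b b : \esum_(a in Bs iota) (lpnorm 1 (Psi a b))%:E <= E1 Phi.
Proof.
apply: (le_trans _ (esum_shift_le iota iota_inj (fun x => (Phi x)%:E) b _)); last first.
  by move=> x; rewrite lee_fin.
apply: le_esum => a _; rewrite lpnorm1E' //.
apply: le_esum => k _; rewrite lee_fin.
have -> : (a + iota k + b = a + b + iota k)%R by rewrite addrAC.
exact: claim1.
Qed.

Let F4a a : (gam * u a)%:E * V1e <= E1 Phi.
Proof.
rewrite /V1e -esumZl; last by move=> b; rewrite lee_fin lpnorm_ge0.
  apply: le_trans (F3a a); apply: le_esum => b _; rewrite -EFinM lee_fin -mulrA.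
  exact: HK.
by rewrite mulr_ge0 ?lpnorm_ge0 // ltW.
Qed.

Let F4b b : (gam * v b)%:E * U1e <= E1 Phi.
Proof.
rewrite /U1e -esumZl; last by move=> a; rewrite lee_fin lpnorm_ge0.
  apply: le_trans (F3b b); apply: le_esum => a _; rewrite -EFinM lee_fin.
  rewrite -mulrA [(v b * _)%R]mulrC.
  exact: HK.
by rewrite mulr_ge0 ?lpnorm_ge0 // ltW.
Qed.

Let Ep_comp_g : Ep p g = \esum_(a in Bs iota) (powR (u a) p)%:E.
Proof.
rewrite /Ep (esum_decomp iota iota_inj (fun x => (powR (g x) p)%:E)); last first.
  by move=> x; rewrite lee_fin powR_ge0.
apply: eq_esum => a _.
rewrite /u lpnormE // powR_invK ?fine_ge0 ?Ep_ge0 //; last first.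
  by rewrite gt_eqF // (lt_trans ltr01 p1).
by rewrite -Ep_finE //; apply: Ep_fin => //; exact: ltW.
Qed.

Let Ep_comp_h : Ep q h = \esum_(b in Bs iota) (powR (v b) q)%:E.
Proof.
rewrite /Ep (esum_decomp iota iota_inj (fun x => (powR (h x) q)%:E)); last first.
  by move=> x; rewrite lee_fin powR_ge0.
apply: eq_esum => b _.
rewrite /v lpnormE // powR_invK ?fine_ge0 ?Ep_ge0 //; last first.
  by rewrite gt_eqF // (lt_trans ltr01 q1).
by rewrite -Ep_finE //; apply: Ep_fin => //; exact: ltW.
Qed.

Let upos : exists2 a, Bs iota a & (0 < u a)%R.
Proof.
have [x gx] : exists x, g x != 0%R.
  apply: contrapT => n; apply: gnz; apply: funext => x.
  have [//|gx] := eqVneq (g x) 0%R; exfalso; apply: n; by exists x.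
have [k hk] := decomp iota x.
exists (rep iota x); first exact: Bs_rep.
apply: (@lpnorm_gt0 _ _ _ _ k); [exact: ltW | exact: ga0 | exact: gal |].
by rewrite /ga /= -hk.
Qed.

Let vpos : exists2 b, Bs iota b & (0 < v b)%R.
Proof.
have [x gx] : exists x, h x != 0%R.
  apply: contrapT => n; apply: hnz; apply: funext => x.
  have [//|gx] := eqVneq (h x) 0%R; exfalso; apply: n; by exists x.
have [k hk] := decomp iota x.
exists (rep iota x); first exact: Bs_rep.
apply: (@lpnorm_gt0 _ _ _ _ k); [exact: ltW | exact: hb0 | exact: hbl |].
by rewrite /hb /= -hk.
Qed.

Lemma main_ineq : (gam * (lpnorm p g * lpnorm (conj_exp p) h) <= lpnorm 1 Phi)%R.
Proof.
rewrite (lpnorm1E _ Phi0).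
apply: (@abstract_main _ _ (Bs iota) u v p gam (E1 Phi) (Ep p g) (Ep q h)
  (lpnorm p g) (lpnorm q h)).
- exact: p1.
- exact: gam0.
- move=> a; exact: lpnorm_ge0.
- move=> b; exact: lpnorm_ge0.
- exact: upos.
- exact: vpos.
- exact: (E1_ge0 _ Phi0).
- rewrite -(ell1E _ Phi0); exact: Phil.
- exact: F4a.
- exact: F4b.
- exact: Ep_comp_g.
- exact: Ep_comp_h.
- exact: (Ep_fin _ _ (ltW p1) g0 gl).
- exact: (Ep_fin _ _ (ltW q1) h0 hl).
- exact: (lpnormE _ _ g0).
- exact: (lpnormE _ _ h0).
Qed.

End Main.


Lemma lpnorm_zero (R : realType) (T : zmodType) (r : R) : r != 0 ->
  lpnorm r (fun _ : T => 0 : R) = 0.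
Proof.
move=> r0; rewrite /lpnorm esum1; last by move=> x _; rewrite normr0 powR0.
by rewrite /= powR0 // invr_eq0.
Qed.

Definition delta (R : realType) (T : zmodType) : T -> R :=
  fun x => if x == 0 then 1 else 0.

Lemma delta_prop (R : realType) (T : zmodType) :
  [/\ ell1 (delta R T), nonneg (delta R T) & delta R T <> (fun _ => 0)].
Proof.
have d0 : nonneg (delta R T) by move=> x; rewrite /delta; case: ifP.
split => //.
- rewrite ell1E // /E1 (esumID [set 0]); last by move=> x _; rewrite lee_fin.
  rewrite setTI esum_set1 ?lee_fin // esum1 ?adde0 ?ltry //.
  by move=> x [_ /eqP x0]; rewrite /delta (negbTE x0).
- move=> e; have := congr1 (fun f => f 0) e; rewrite /delta eqxx /=.
  by move/eqP; rewrite oner_eq0.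
Qed.

Lemma ratio_ge0 (R : realType) (T : zmodType) (p : R) (F g h : T -> R) :
  0 <= lpnorm 1 (maxconv (maxconv F g) h) / (lpnorm p g * lpnorm (conj_exp p) h).
Proof. by rewrite divr_ge0 ?mulr_ge0 ?lpnorm_ge0. Qed.

Theorem mainTheorem10 (R : realType) (G K : zmodType) (iota : {additive K -> G})
  (iota_inj : injective iota) (p : R) (f : K -> R) :
  1 < p -> ell1 f -> nonneg f ->
  gamma p (ext_zero iota f) = gamma p f.
Proof.
move=> p1 fl f0.
have p0 : p != 0 by rewrite gt_eqF // (lt_trans ltr01 p1).
have q1 := conj_gt1 _ _ p1.
have q0 : conj_exp p != 0 by rewrite gt_eqF // (lt_trans ltr01 q1).
have fb := bnd_ell1 _ f0 fl.
set F := ext_zero iota f.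
rewrite /gamma.
set SG := [set r | _].
set SK := [set r | _].
have SKSG : SK `<=` SG.
  move=> r [g' [h' [[g'l g'0 g'nz] [[h'l h'0 h'nz] ->]]]].
  exists (ext_zero iota g'), (ext_zero iota h'); split.
    by split; [exact: (ell1_ext iota iota_inj)|exact: (ext_nonneg iota)|exact: (ext_nz iota iota_inj)].
  split; first by split; [exact: (ell1_ext iota iota_inj)|exact: (ext_nonneg iota)|exact: (ext_nz iota iota_inj)].
  have g'b := bnd_ell1 _ g'0 g'l; have h'b := bnd_ell1 _ h'0 h'l.
  rewrite /F (mc_ext iota iota_inj) // (mc_ext iota iota_inj) //; last first.
  - exact: mc_bnd.
  - exact: mc_nonneg.
  rewrite (lpnorm_ext iota iota_inj) ?oner_eq0 // (lpnorm_ext iota iota_inj) //.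
  by rewrite (lpnorm_ext iota iota_inj).
have SKn : SK !=set0.
  have [d1 d2 d3] := delta_prop R K.
  by eexists; exists (delta R K), (delta R K); split; [|split; [|reflexivity]].
have SGn : SG !=set0 by case: SKn => r /SKSG Hr; exists r.
have SGl : has_lbound SG by exists 0 => _ [g [h [_ [_ ->]]]]; exact: ratio_ge0.
have SKl : has_lbound SK by exists 0 => _ [g [h [_ [_ ->]]]]; exact: ratio_ge0.
apply/le_anti/andP; split.
  apply: lb_le_inf => // r Hr; exact: (ge_inf SGl (SKSG _ Hr)).
apply: lb_le_inf => // r [g [h [[gl g0 gnz] [[hl h0 hnz] ->]]]].
set gam := inf SK.
have [gam_le0|gam_gt0] := leP gam 0.
  by apply: le_trans gam_le0 _; exact: ratio_ge0.
have HK : forall g' h' : K -> R, nonneg g' -> ell1 g' -> nonneg h' -> ell1 h' ->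
     gam * (lpnorm p g' * lpnorm (conj_exp p) h') <=
     lpnorm 1 (maxconv (maxconv f g') h').
  move=> g' h' g'0 g'l h'0 h'l.
  have g'b := bnd_ell1 _ g'0 g'l; have h'b := bnd_ell1 _ h'0 h'l.
  have L0 : 0 <= lpnorm 1 (maxconv (maxconv f g') h') by exact: lpnorm_ge0.
  have [PQ0|PQn0] := eqVneq (lpnorm p g' * lpnorm (conj_exp p) h') 0.
    by rewrite PQ0 mulr0.
  have PQp : 0 < lpnorm p g' * lpnorm (conj_exp p) h'.
    by rewrite lt_def PQn0 mulr_ge0 ?lpnorm_ge0.
  rewrite -ler_pdivlMr //.
  apply: (ge_inf SKl); exists g', h'; split.
    split => // e; move: PQn0; rewrite e lpnorm_zero // mul0r eqxx //.
  split; last by [].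
  split => // e; move: PQn0; rewrite e lpnorm_zero // mulr0 eqxx //.
have := main_ineq iota iota_inj p f g h gam p1 f0 fl g0 gl gnz h0 hl hnz gam_gt0 HK.
have [x gx] : exists x, g x != 0.
  apply: contrapT => n; apply: gnz; apply: funext => x.
  have [//|gx] := eqVneq (g x) 0; exfalso; apply: n; by exists x.
have [y hy] : exists y, h y != 0.
  apply: contrapT => n; apply: hnz; apply: funext => y.
  have [//|hy] := eqVneq (h y) 0; exfalso; apply: n; by exists y.
have Pp : 0 < lpnorm p g.
  apply: (lpnorm_gt0 _ _ _ _ x); [exact: (ltW p1)|exact: g0|exact: gl|exact: gx].
have Qp : 0 < lpnorm (conj_exp p) h.
  apply: (lpnorm_gt0 _ _ _ _ y); [exact: (ltW q1)|exact: h0|exact: hl|exact: hy].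
move=> H. rewrite ler_pdivlMr. exact: H. exact: (mulr_gt0 Pp Qp).
Qed.
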